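(* Let $p$ be an odd prime and let $a$ be an integer with $a\not\equiv \pm 1 \pmod p$. Put $\epsilon=\left(\frac{a^2-1}{p}\right)$ and $\delta=\left(\frac{2(a+1)}{p}\right)$ (Legendre symbols; both lie in $\{\pm1\}$ under this hypothesis), and let $\omega_a=a+\sqrt{a^2-1}$. Then, in the ring $\mathbb{Z}[\sqrt{a^2-1}]$ (i.e. $\mathbb{Z}[X]/(X^2-(a^2-1))$) reduced modulo $p$, $$\omega_a^{\frac{p-\epsilon}{2}}\equiv \delta,\qquad \omega_a^{\frac{p+\epsilon}{2}}\equiv \delta\,\omega_a^{\epsilon}\pmod p,$$ equivalently $$T_{(p-\epsilon)/2}(a)\equiv\delta,\quad U_{(p-\epsilon)/2-1}(a)\equiv 0,\quad T_{(p+\epsilon)/2}(a)\equiv\delta a,\quad U_{(p+\epsilon)/2-1}(a)\equiv\delta\epsilon \pmod p.$$ Moreover $T_{(p-\epsilon)/2}(a)\equiv\delta \pmod{p^2}$, and $T_{(p-\epsilon)/2}(a)\equiv\delta \pmod p$ by itself implies $U_{(p-\epsilon)/2-1}(a)\equiv 0\pmod p$.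
   Context: The Chebyshev polynomials $T_n(x)$ (first kind) and $U_{n}(x)$ (second kind) are the integer polynomials determined by $(x+\sqrt{x^2-1})^n=T_n(x)+U_{n-1}(x)\sqrt{x^2-1}$ for $n\ge 0$ (so $T_0=1$, $U_{-1}=0$, $T_1=x$, $U_0=1$, and $T_n(\cos\theta)=\cos n\theta$). For an element $u+v\sqrt{a^2-1}$ with $u,v\in\mathbb{Z}$, congruence modulo $p$ means $u$ and $v$ are each congruent modulo $p$; $\omega_a^{-1}=a-\sqrt{a^2-1}$. *)

(* Defs.v *)
From mathcomp Require Import all_boot all_order all_algebra.
Set Implicit Arguments. Unset Strict Implicit. Unset Printing Implicit Defensive.
Import GRing.Theory Num.Theory.
Local Open Scope ring_scope.

(* Elements u + v*sqrt(d) of Z[sqrt d] represented as pairs (u, v) of integers. *)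
Definition qmul (d : int) (x y : int * int) : int * int :=
  (x.1 * y.1 + d * x.2 * y.2, x.1 * y.2 + x.2 * y.1).

Definition qpow (d : int) (x : int * int) (n : nat) : int * int :=
  iter n (qmul d x) (1, 0).

Definition omega (a : int) : int * int := (a, 1).
Definition omega_inv (a : int) : int * int := (a, -1).

(* (a + sqrt(a^2-1))^n = T_n(a) + U_{n-1}(a) sqrt(a^2-1) *)
Definition chebT (a : int) (n : nat) : int := (qpow (a ^+ 2 - 1) (omega a) n).1.
(* chebU a m = U_m(a), the sqrt-coefficient of omega_a^(m+1) *)
Definition chebU (a : int) (m : nat) : int := (qpow (a ^+ 2 - 1) (omega a) m.+1).2.

Definition qcong (p : int) (x y : int * int) : Prop :=
  (x.1 = y.1 %[mod p])%Z /\ (x.2 = y.2 %[mod p])%Z.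

Definition legendre (p : nat) (x : int) : int :=
  if (p%:Z %| x)%Z then 0
  else if [exists y : 'I_p, (p%:Z %| (nat_of_ord y)%:Z ^+ 2 - x)%Z] then 1 else -1.

(* Main.v *)
Require Import Defs.
From mathcomp Require Import all_boot all_order all_algebra all_field all_solvable.
From mathcomp Require Import ring lra zify.
Import GRing.Theory Num.Theory.
Set Implicit Arguments. Unset Strict Implicit. Unset Printing Implicit Defensive.
Local Open Scope ring_scope.
Lemma natFp0 p (pr : prime p) (n : nat) : ((n%:R : 'F_p) == 0) = (p %| n)%N.
Proof.
by rewrite -val_eqE /= val_Fp_nat // /dvdn; case: (n %% p)%N.
Qed.

Lemma intFp0 p (pr : prime p) (z : int) : ((z%:~R : 'F_p) == 0) = (p%:Z %| z)%Z.
Proof.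
rewrite dvdzE /=; case: z => n.
  by rewrite -pmulrn natFp0.
by rewrite NegzE mulrNz oppr_eq0 -pmulrn natFp0.
Qed.

Lemma intFp_eq p (pr : prime p) (x y : int) :
  ((x%:~R : 'F_p) = y%:~R) <-> (x = y %[mod p%:Z])%Z.
Proof.
split.
  by move=> h; apply/eqP; rewrite eqz_mod_dvd -intFp0 // rmorphB /= h subrr.
by move/eqP; rewrite eqz_mod_dvd -intFp0 // rmorphB /= subr_eq0 => /eqP.
Qed.
Lemma fermatFp p (pr : prime p) (x : 'F_p) : x != 0 -> x ^+ p.-1 = 1.
Proof.
move=> nz; have p0 : (0 < p)%N by apply: prime_gt0.
have : x ^+ (p.-1).+1 = x by rewrite prednK // -{2}(expf_card x) card_Fp.
rewrite exprS => h.
by apply: (mulfI nz); rewrite h mulr1.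
Qed.

Lemma eulerFp p (pr : prime p) (op : odd p) (x : 'F_p) : x != 0 ->
  x ^+ (p./2) = if [exists y : 'F_p, y ^+ 2 == x] then 1 else -1.
Proof.
move=> nz.
have p2 : p = (p./2).*2.+1 by rewrite -[LHS]odd_double_half op.
set n := p./2 in p2 *.
have n0 : (0 < n)%N by move: (prime_gt1 pr); rewrite p2; case: (n).
have pm1 : p.-1 = (n.*2)%N by rewrite p2.
case: existsP => [[y /eqP hy]|nex].
  have y0 : y != 0 by apply: contra nz => /eqP y0; rewrite -hy y0 expr0n.
  by rewrite -hy -exprM mul2n -pm1 fermatFp.
have hz : (x ^+ n) ^+ 2 == 1 by rewrite -exprM muln2 -pm1 fermatFp.
move: hz; rewrite sqrf_eq1 => /orP [/eqP h1|/eqP //].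
exfalso.
pose rs := [seq z <- enum 'F_p | z != 0].
have [g _ gpr] : exists2 g, g \in rs & (p.-1).-primitive_root g.
  apply/hasP; apply: has_prim_root.
  - by rewrite pm1 double_gt0.
  - apply/allP => z; rewrite mem_filter => /andP [z0 _].
    by rewrite unity_rootE fermatFp.
  - by rewrite filter_uniq // enum_uniq.
  - rewrite size_filter.
    have := cardC1 (0 : 'F_p); rewrite card_Fp // => <-.
    rewrite cardE enumT /enum_mem size_filter /=.
    by apply: eq_leq; apply: eq_count => z.
have [[i _] /= hi] := prim_rootP gpr (@fermatFp p pr x nz).
have ei : i = (odd i + (i./2).*2)%N :> nat by rewrite odd_double_half.
case oi : (odd i) ei => /= ei.
  move: h1; rewrite hi -exprM => /eqP.
  rewrite -(expr0 g) (eq_prim_root_expr gpr) pm1 mod0n ei.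
  rewrite mulnDl mul1n -muln2 mulnAC muln2 addnC.
  rewrite doubleMr modnMDl modn_small ?gtn_eqF //.
  by rewrite -addnn -[X in (X < _)%N]addn0 ltn_add2l.
apply: nex; exists (g ^+ (i./2)); rewrite hi -exprM muln2; move: ei; rewrite add0n => <-.

by [].
Qed.


Lemma legendreFp p (pr : prime p) (op : odd p) (z : int) : ~~ (p%:Z %| z)%Z ->
  (legendre p z = 1 \/ legendre p z = -1) /\
  ((legendre p z)%:~R : 'F_p) = (z%:~R : 'F_p) ^+ p./2.
Proof.
move=> nd.
have z0 : (z%:~R : 'F_p) != 0 by rewrite intFp0.
rewrite eulerFp // /legendre (negbTE nd).
have -> : [exists y : 'I_p, (p%:Z %| (nat_of_ord y)%:Z ^+ 2 - z)%Z] =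
          [exists y : 'F_p, y ^+ 2 == z%:~R].
  apply/existsP/existsP => [[y hy]|[y hy]].
    exists ((nat_of_ord y)%:R); move: hy; rewrite -intFp0 //.
    by rewrite rmorphB rmorphXn /= -pmulrn subr_eq0.
  have yl : (val y < p)%N by apply: (leq_trans (ltn_ord y)); rewrite Fp_cast.
  exists (Ordinal yl); rewrite -intFp0 //= rmorphB rmorphXn /= -pmulrn subr_eq0.
  by rewrite natr_Zp.
by case: existsP => _; split; auto.
Qed.
Definition K (R : comNzRingType) (d u v : R) : 'M[R]_2 :=
  \matrix_(i, j) (if i == j then u else if i == ord0 then d * v else v).

Lemma K_mul (R : comNzRingType) (d u v u' v' : R) :
  K d u v * K d u' v' = K d (u * u' + d * v * v') (u * v' + v * u').
Proof.
apply/matrixP => i j; rewrite -mulmxE !mxE !big_ord_recr big_ord0 !mxE.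
by case: i => [[|[|//]] ?]; case: j => [[|[|//]] ?] /=; ring.
Qed.

Lemma K_add (R : comNzRingType) (d u v u' v' : R) :
  K d u v + K d u' v' = K d (u + u') (v + v').
Proof.
apply/matrixP => i j; rewrite !mxE.
by case: i => [[|[|//]] ?]; case: j => [[|[|//]] ?] /=; ring.
Qed.

Lemma K1 (R : comNzRingType) (d : R) : K d 1 0 = 1.
Proof.
apply/matrixP => i j; rewrite !mxE.
by case: i => [[|[|//]] ?]; case: j => [[|[|//]] ?] /=; ring.
Qed.

Lemma K_inj (R : comNzRingType) (d u v u' v' : R) :
  K d u v = K d u' v' -> u = u' /\ v = v'.
Proof.
move/matrixP => h; split.
  by have := h ord0 ord0; rewrite !mxE.
by have := h ord_max ord0; rewrite !mxE.
Qed.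

Lemma K_comm (R : comNzRingType) (d u v u' v' : R) :
  GRing.comm (K d u v) (K d u' v').
Proof. by rewrite /GRing.comm !K_mul; congr K; ring. Qed.

Lemma K_expu (R : comNzRingType) (d u : R) n : K d u 0 ^+ n = K d (u ^+ n) 0.
Proof.
elim: n => [|n IH]; first by rewrite !expr0 K1.
by rewrite exprS IH K_mul exprS; congr K; ring.
Qed.

Lemma K_expJ (R : comNzRingType) (d v : R) k :
  K d 0 v ^+ (k.*2.+1) = K d 0 (d ^+ k * v ^+ k.*2.+1).
Proof.
elim: k => [|k IH]; first by rewrite expr1 !expr0 mul1r.
rewrite doubleS 2!exprS IH !K_mul; congr K; rewrite !exprS; ring.
Qed.

Lemma K_frob p (pr : prime p) (op : odd p) (d u v : 'F_p) :
  K d u v ^+ p = K d (u ^+ p) (d ^+ p./2 * v ^+ p).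
Proof.
have chM : p \in [pchar 'M['F_p]_2].
  rewrite inE pr /= -scaler_nat pchar_Fp_0 // scale0r //.
have -> : K d u v = K d u 0 + K d 0 v by rewrite K_add; congr K; ring.
rewrite -(pFrobenius_autE chM) pFrobenius_autD_comm; last exact: K_comm.
rewrite !pFrobenius_autE K_expu.
have e : (p./2).*2.+1 = p by rewrite -[RHS]odd_double_half op.
have := K_expJ d v p./2; rewrite e => ->.
by rewrite K_add; congr K; ring.
Qed.

Definition Mq p (d : int) (x : int * int) : 'M['F_p]_2 :=
  K (d%:~R) (x.1%:~R) (x.2%:~R).

Lemma Mq_mul p d x y : Mq p d (qmul d x y) = Mq p d x * Mq p d y.
Proof. by rewrite /Mq K_mul /qmul /= !rmorphD !rmorphM. Qed.

Lemma Mq_pow p d x n : Mq p d (qpow d x n) = Mq p d x ^+ n.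
Proof.
elim: n => [|n IH].
  by rewrite /Mq /= expr0 mulr1z mulr0z K1.
by rewrite /qpow iterS -/(qpow d x n) Mq_mul IH exprS.
Qed.

Lemma qcongE p (pr : prime p) d x y : qcong p%:Z x y <-> Mq p d x = Mq p d y.
Proof.
rewrite /qcong /Mq; split.
  by case=> /(intFp_eq pr) -> /(intFp_eq pr) ->.
by case/K_inj => /(intFp_eq pr) ? /(intFp_eq pr).
Qed.

Lemma Kinv (R : comNzRingType) (d s s' : R) : s * s' = 1 -> K d s 0 * K d s' 0 = 1.
Proof. by move=> h; rewrite K_mul -(K1 d) mulr0 mul0r addr0 h; congr K; ring. Qed.

Lemma coreF p (pr : prime p) (op : odd p) (al dl el : 'F_p) :
  let dF := al ^+ 2 - 1 in let c := 2 * (al + 1) in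
  c != 0 -> el = dF ^+ p./2 -> dl = c ^+ p./2 ->
  let W := K dF al 1 in
  (el = 1 -> W ^+ p./2 = K dF dl 0 /\ W ^+ (p./2).+1 = K dF dl 0 * W) /\
  (el = -1 -> W ^+ (p./2).+1 = K dF dl 0 /\ W ^+ p./2 = K dF dl 0 * K dF al (-1)).
Proof.
move=> dF c c0 he hd W.
set n := p./2.
have p2 : (n.*2.+1 = p)%N by rewrite -[RHS]odd_double_half op.
have fp : forall x : 'F_p, x ^+ p = x.
  by move=> x; rewrite -{2}(expf_card x) card_Fp.
have dl2 : dl * dl = 1.
  have fp2 : forall x : 'F_p, x ^+ n.*2.+1 = x by move=> x; rewrite p2 fp.
  have := fp2 c; rewrite exprS -mul2n exprM -expr2 => h.
  by apply: (mulfI c0); rewrite mulr1 -{2}h hd -!exprM mulnC.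
pose G := K dF (al + 1) 1.
pose G' := K dF (al + 1) (-1).
have GG : G * G = K dF c 0 * W by rewrite !K_mul; congr K; rewrite /dF /c; ring.
have G'G : G' * G = K dF c 0 by rewrite !K_mul; congr K; rewrite /dF /c; ring.
have GG' : G * G' = K dF c 0 by rewrite !K_mul; congr K; rewrite /dF /c; ring.
have Gp : G ^+ p = K dF (al + 1) el by rewrite K_frob // fp expr1n mulr1 he.
have G2 : forall m, G ^+ (m.*2) = K dF (c ^+ m) 0 * W ^+ m.
  move=> m; rewrite -mul2n exprM expr2 GG exprMn_comm ?K_expu //; exact: K_comm.
have cinv : c * c^-1 = 1 by rewrite mulfV.
split => el1.
  have h1 : G ^+ n.*2 = 1.
    have : G ^+ n.*2 * (G * G') = G * G' by rewrite mulrA -exprSr p2 Gp el1.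
    rewrite GG' => /(congr1 (fun M => M * K dF c^-1 0)).
    by rewrite -mulrA Kinv // mulr1.
  have h2 : W ^+ n = K dF dl 0.
    move: h1; rewrite G2 -hd => /(congr1 (fun M => K dF dl 0 * M)).
    by rewrite mulrA Kinv // mul1r mulr1.
  by split => //; rewrite exprSr h2.
have h1 : W ^+ n.+1 = K dF dl 0.
  have : G ^+ (n.+1).*2 = K dF c 0.
    by rewrite doubleS exprSr p2 Gp el1.
  rewrite G2 exprS -hd => /(congr1 (fun M => K dF (dl * c^-1) 0 * M)).
  rewrite mulrA.
  have -> : K dF (dl * c^-1) 0 * K dF (c * dl) 0 = 1.
    apply: Kinv.
    have -> : dl / c * (c * dl) = (c / c) * (dl * dl) by ring.
    by rewrite cinv mul1r dl2.
  rewrite mul1r => ->.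
  rewrite K_mul; congr K; rewrite ?mulr0 ?addr0 ?mul0r ?add0r //.
  have -> : dl / c * c = dl * (c / c) by ring.
  by rewrite cinv mulr1.
split => //.
have WW' : W * K dF al (-1) = 1 by rewrite K_mul -(K1 dF); congr K; rewrite /dF; ring.
by rewrite -h1 exprSr -mulrA WW' mulr1.
Qed.

Lemma qnorm_pow (d : int) x n :
  (qpow d x n).1 ^+ 2 - d * (qpow d x n).2 ^+ 2 = (x.1 ^+ 2 - d * x.2 ^+ 2) ^+ n.
Proof.
elim: n => [|n IH]; first by rewrite /= expr0; ring.
rewrite /qpow iterS -/(qpow d x n) [in RHS]exprS -IH /qmul /=; ring.
Qed.

Lemma two_neq0 p (pr : prime p) (op : odd p) : (2 : 'F_p) != 0.
Proof.
rewrite -[2]/(2%:R) natFp0 //; apply/negP => /dvdn_leq h.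
have := prime_gt1 pr; have : (p <= 2)%N by apply: h.
case: p pr op {h} => [|[|[|]]] //.
Qed.

Lemma modp2 p (pr : prime p) (op : odd p) (T U d dl : int) :
  T ^+ 2 - d * U ^+ 2 = 1 -> dl ^+ 2 = 1 ->
  (T = dl %[mod p%:Z])%Z -> (U = 0 %[mod p%:Z])%Z -> (T = dl %[mod p%:Z ^+ 2])%Z.
Proof.
move=> nrm dl2 /eqP hT /eqP hU.
move: hT hU; rewrite !eqz_mod_dvd => /dvdzP [k hk] /dvdzP [u hu].
rewrite subr0 in hu.
have pnz : p%:Z != 0 by rewrite eqz_nat -lt0n prime_gt0.
have key : k * (k * p%:Z + 2 * dl) = d * u ^+ 2 * p%:Z.
  apply: (mulIf pnz); apply/eqP; rewrite -subr_eq0; apply/eqP.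
  have hT' : T = k * p%:Z + dl by rewrite -hk; ring.
  rewrite hT' hu in nrm.
  have -> : k * (k * p%:Z + 2 * dl) * p%:Z - d * u ^+ 2 * p%:Z * p%:Z =
     ((k * p%:Z + dl) ^+ 2 - d * (u * p%:Z) ^+ 2 - 1) + (1 - dl ^+ 2) by ring.
  by rewrite nrm dl2 !subrr.
have pF : (p%:Z%:~R : 'F_p) = 0 by rewrite -pmulrn pchar_Fp_0.
have dlF : (dl%:~R : 'F_p) != 0.
  apply/eqP => h; have := congr1 (fun z : int => (z%:~R : 'F_p)) dl2.
  by rewrite /= rmorphXn /= h expr0n mulr1z => /eqP; rewrite eq_sym oner_eq0.
have kF : (k%:~R : 'F_p) = 0.
  have := congr1 (fun z : int => (z%:~R : 'F_p)) key.
  rewrite /= !rmorphM /= rmorphD /= !rmorphM /= pF !mulr0 add0r.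
  move/eqP; rewrite mulf_eq0 => /orP [/eqP //|].
  rewrite mulf_eq0 => /orP [] /eqP h; exfalso.
    move: (two_neq0 pr op); rewrite -h.
    by rewrite -[2%:~R]pmulrn eqxx.
  by move: dlF; rewrite h eqxx.
apply/eqP; rewrite eqz_mod_dvd hk expr2.
by apply: dvdz_mul => //; rewrite -intFp0 // kF.
Qed.

Lemma n_arith n :
  [/\ (`|((n.*2.+1)%:Z - 1)%R| %/ 2 = n)%N, (`|((n.*2.+1)%:Z + 1)%R| %/ 2 = n.+1)%N,
      (`|((n.*2.+1)%:Z - (-1))%R| %/ 2 = n.+1)%N & (`|((n.*2.+1)%:Z + (-1))%R| %/ 2 = n)%N].
Proof. split; lia. Qed.

Theorem theorem2p1 (p : nat) (a : int) :
  prime p -> odd p ->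
  ~ (a = 1 %[mod p%:Z])%Z -> ~ (a = -1 %[mod p%:Z])%Z ->
  let eps := legendre p (a ^+ 2 - 1) in
  let delta := legendre p (2 * (a + 1)) in
  let d := a ^+ 2 - 1 in
  let n1 := (absz (p%:Z - eps)%R %/ 2)%N in   (* (p - eps)/2 *)
  let n2 := (absz (p%:Z + eps)%R %/ 2)%N in   (* (p + eps)/2 *)
  (eps = 1 \/ eps = -1) /\ (delta = 1 \/ delta = -1) /\
  qcong p%:Z (qpow d (omega a) n1) (delta, 0) /\
  qcong p%:Z (qpow d (omega a) n2)
          (qmul d (delta, 0) (if eps == 1 then omega a else omega_inv a)) /\
  (chebT a n1 = delta %[mod p%:Z])%Z /\
  (chebU a n1.-1 = 0 %[mod p%:Z])%Z /\
  (chebT a n2 = delta * a %[mod p%:Z])%Z /\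
  (chebU a n2.-1 = delta * eps %[mod p%:Z])%Z /\
  (chebT a n1 = delta %[mod (p%:Z) ^+ 2])%Z /\
  ((chebT a n1 = delta %[mod p%:Z])%Z -> (chebU a n1.-1 = 0 %[mod p%:Z])%Z).
Proof.
move=> pr op na1 nam1 eps delta d n1 n2.
have epsE : eps = legendre p (a ^+ 2 - 1) := erefl.
have deltaE : delta = legendre p (2 * (a + 1)) := erefl.
have dE : d = a ^+ 2 - 1 := erefl.
have n1E : n1 = (absz (p%:Z - eps)%R %/ 2)%N := erefl.
have n2E : n2 = (absz (p%:Z + eps)%R %/ 2)%N := erefl.
clearbody eps delta d n1 n2.
set n := p./2.
have p2 : p = n.*2.+1 by rewrite -[LHS]odd_double_half op.
have n0 : (0 < n)%N by move: (prime_gt1 pr); rewrite p2; case: (n).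
pose al : 'F_p := a%:~R.
have a1 : al != 1.
  by apply/eqP => h; apply: na1; apply/(intFp_eq pr); rewrite -/al h mulr1z.
have am1 : al != -1.
  by apply/eqP => h; apply: nam1; apply/(intFp_eq pr); rewrite -/al h mulrNz mulr1z.
have dF : (d%:~R : 'F_p) = al ^+ 2 - 1 by rewrite dE rmorphB rmorphXn /= mulr1z.
have cF : ((2 * (a + 1))%:~R : 'F_p) = 2 * (al + 1).
  by rewrite rmorphM /= !rmorphD /= mulr1z.
have c0 : 2 * (al + 1) != 0.
  rewrite mulf_neq0 ?two_neq0 //; apply: contra am1.
  by rewrite addr_eq0.
have d0 : (d%:~R : 'F_p) != 0.
  rewrite dF; have -> : al ^+ 2 - 1 = (al - 1) * (al + 1) by ring.
  rewrite mulf_neq0 //; first by rewrite subr_eq0.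
  by apply: contra am1; rewrite addr_eq0.
have nd : ~~ (p%:Z %| d)%Z by rewrite -intFp0.
have [epspm epsF] := legendreFp pr op nd.
rewrite dF in epsF; rewrite dE -epsE in epspm epsF.
have nc : ~~ (p%:Z %| 2 * (a + 1))%Z by rewrite -intFp0 // cF.
have [delpm delF] := legendreFp pr op nc.
rewrite -deltaE cF in delpm delF.
have [C1 C2] := coreF pr op c0 epsF delF.
have Mom : Mq p d (omega a) = K (al ^+ 2 - 1) al 1 by rewrite /Mq dF /= mulr1z.
have Momi : Mq p d (omega_inv a) = K (al ^+ 2 - 1) al (-1)
  by rewrite /Mq dF /= mulrNz mulr1z.
have Mdl : Mq p d (delta, 0) = K (al ^+ 2 - 1) (delta%:~R) 0 by rewrite /Mq dF /= mulr0z.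
have [Q1 Q2] : (qcong p%:Z (qpow d (omega a) n1) (delta, 0)) /\ (qcong p%:Z (qpow d (omega a) n2) (qmul d (delta, 0) (if eps == 1 then omega a else omega_inv a))).
  rewrite !(qcongE pr d) !Mq_pow Mq_mul Mom Mdl.
  case: (epspm) => he; rewrite he.
    have [e1 e2 _ _] := n_arith n.
    have -> : n1 = n by rewrite n1E he p2 e1.
    have -> : n2 = n.+1 by rewrite n2E he p2 e2.
    by rewrite eqxx Mom; apply: C1; rewrite he mulr1z.
  have [_ _ e3 e4] := n_arith n.
  have -> : n1 = n.+1 by rewrite n1E he p2 e3.
  have -> : n2 = n by rewrite n2E he p2 e4.
  by rewrite /= Momi; apply: C2; rewrite he mulrNz mulr1z.
have n1pos : (0 < n1)%N.
  have [e1 _ e3 _] := n_arith n.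
  by case: (epspm) => he; rewrite n1E he p2 ?e1 ?e3.
have n2pos : (0 < n2)%N.
  have [_ e2 _ e4] := n_arith n.
  by case: (epspm) => he; rewrite n2E he p2 ?e2 ?e4.
have hT : forall m, chebT a m = (qpow d (omega a) m).1 by move=> m; rewrite /chebT dE.
have hU : forall m, (0 < m)%N -> chebU a m.-1 = (qpow d (omega a) m).2.
  by move=> m m0; rewrite /chebU prednK // dE.
have hq : qmul d (delta, 0) (if eps == 1 then omega a else omega_inv a) =
          (delta * a, delta * eps).
  case: (epspm) => he; rewrite he /qmul /=; congr pair; ring.
have Q2' := Q2; rewrite hq in Q2'.
case: (Q1) => Q1a Q1b; case: Q2' => Q2a Q2b.
have dl2 : delta ^+ 2 = 1 by case: delpm => ->.
have nrm : (qpow d (omega a) n1).1 ^+ 2 - d * (qpow d (omega a) n1).2 ^+ 2 = 1.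
  rewrite qnorm_pow /=.
  have -> : a ^+ 2 - d * 1 ^+ 2 = 1 by rewrite dE; ring.
  by rewrite expr1n.
rewrite !hT !hU //.
split; first exact: epspm.
split; first exact: delpm.
split; first exact: Q1.
split; first exact: Q2.
split; first exact: Q1a.
split; first exact: Q1b.
split; first exact: Q2a.
split; first exact: Q2b.
split; last by move=> _; exact: Q1b.
exact: (modp2 pr op nrm dl2 Q1a Q1b).
Qed.
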